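(* For every $0<\epsilon<1$, $\{\Xi_{\mathrm{Sp}_{\mathrm{ap},\epsilon}},\Omega^B_{\ell^2(\mathbb{N})},\mathcal{M}_{\mathrm{H}},\Lambda_{\mathbb{N}}\}\notin\Delta_2^G$; that is, there is no sequence of general algorithms $\Gamma_n$ with $\lim_{n\to\infty}\Gamma_n(F)=\mathrm{Sp}_{\mathrm{ap},\epsilon}(\mathcal{K}_F)$ in the Hausdorff metric for every $F\in\Omega^B_{\ell^2(\mathbb{N})}$.
   Context: $\ell^2(\mathbb{N})$ is regarded as an RKHS of functions on $\mathbb{N}$ with kernel functions $\mathfrak{K}_i=e_i$ (the standard basis vectors). For $F:\mathbb{N}\to\mathbb{N}$ the Koopman operator is $\mathcal{K}_Fg=g\circ F$. $\Omega^B_{\ell^2(\mathbb{N})}$ is the set of $F:\mathbb{N}\to\mathbb{N}$ for which $\mathcal{K}_F$ is a bounded operator on all of $\ell^2(\mathbb{N})$. $\Xi_{\mathrm{Sp}_{\mathrm{ap},\epsilon}}(F)=\mathrm{Sp}_{\mathrm{ap},\epsilon}(\mathcal{K}_F)=\overline{\{z\in\mathbb{C}:\sigma_{\inf}(\mathcal{K}_F-zI)<\epsilon\}}$ where $\sigma_{\inf}(T)=\inf_{\|g\|=1}\|Tg\|$. $\mathcal{M}_{\mathrm{H}}$ is the set of nonempty compact subsets of $\mathbb{C}$ with the Hausdorff metric. $\Lambda_{\mathbb{N}}=\{F\mapsto F(j):j\in\mathbb{N}\}$. A general algorithm for a problem $\{\Xi,\Omega,\mathcal{M},\Lambda\}$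 is a map $\Gamma:\Omega\to\mathcal{M}$ such that for each $\zeta\in\Omega$ there is a nonempty finite $\Lambda_\Gamma(\zeta)\subset\Lambda$ such that whenever $\zeta'\in\Omega$ satisfies $f(\zeta')=f(\zeta)$ for all $f\in\Lambda_\Gamma(\zeta)$, then $\Lambda_\Gamma(\zeta')=\Lambda_\Gamma(\zeta)$ and $\Gamma(\zeta')=\Gamma(\zeta)$. The problem is in $\Delta_2^G$ iff there exist general algorithms $\Gamma_n$ with $\Gamma_n(\zeta)\to\Xi(\zeta)$ for all $\zeta\in\Omega$. *)

(* Defs.v *)
From Stdlib Require Import Reals List.
From Coquelicot Require Import Coquelicot.
Open Scope R_scope.

Definition l2 (g : nat -> C) : Prop := ex_series (fun n => (Cmod (g n)) ^ 2).
Definition l2norm (g : nat -> C) : R := sqrt (Series (fun n => (Cmod (g n)) ^ 2)).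

Definition koopman (F : nat -> nat) (g : nat -> C) : nat -> C := fun n => g (F n).

Definition OmegaB (F : nat -> nat) : Prop :=
  exists M : R, forall g, l2 g -> l2 (koopman F g) /\ l2norm (koopman F g) <= M * l2norm g.

Definition sigma_inf (F : nat -> nat) (z : C) : Rbar :=
  Glb_Rbar (fun r => exists g, l2 g /\ l2norm g = 1 /\
              r = l2norm (fun n => Cminus (koopman F g n) (Cmult z (g n)))).

Definition closureC (S : C -> Prop) : C -> Prop :=
  fun z => forall d : R, 0 < d -> exists w, S w /\ Cmod (Cminus z w) < d.

Definition SpApEps (eps : R) (F : nat -> nat) : C -> Prop :=
  closureC (fun z => Rbar_lt (sigma_inf F z) (Finite eps)).

Definition openC (U : C -> Prop) : Prop :=
  forall z, U z -> exists d : R, 0 < d /\ forall w, Cmod (Cminus w z) < d -> U w.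
Definition compactC (A : C -> Prop) : Prop :=
  forall (I : Type) (U : I -> C -> Prop),
    (forall i, openC (U i)) -> (forall z, A z -> exists i, U i z) ->
    exists l : list I, forall z, A z -> exists i, In i l /\ U i z.
Definition in_MH (A : C -> Prop) : Prop := (exists z, A z) /\ compactC A.

Definition distC (a : C) (B : C -> Prop) : R :=
  real (Glb_Rbar (fun r => exists b, B b /\ r = Cmod (Cminus a b))).
Definition hausdorff (A B : C -> Prop) : Rbar :=
  Lub_Rbar (fun r => (exists a, A a /\ r = distC a B) \/ (exists b, B b /\ r = distC b A)).
Definition hausdorff_cvg (An : nat -> C -> Prop) (A : C -> Prop) : Prop :=
  forall e : R, 0 < e -> exists N : nat, forall n, (N <= n)%nat ->
    Rbar_lt (hausdorff (An n) A) (Finite e).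

(** General algorithms for {Ξ, Ω^B, M_H, Λ_ℕ}: Λ_ℕ = {F ↦ F j : j ∈ ℕ} is
    identified with ℕ; [alg_Lam F] lists the finite nonempty set Λ_Γ(F).
    Only the behaviour on Ω^B matters. *)
Record GenAlg := {
  alg_Gam : (nat -> nat) -> C -> Prop;
  alg_Lam : (nat -> nat) -> list nat;
  alg_Lam_ne : forall F, OmegaB F -> alg_Lam F <> nil;
  alg_out : forall F, OmegaB F -> in_MH (alg_Gam F);
  alg_cons : forall F F', OmegaB F -> OmegaB F' ->
     (forall j, In j (alg_Lam F) -> F' j = F j) ->
     (forall j, In j (alg_Lam F') <-> In j (alg_Lam F)) /\
     (forall z, alg_Gam F' z <-> alg_Gam F z)
}.

(* Main.v *)
Require Import Defs.
From Stdlib Require Import Reals List Permutation Lia Lra IndefiniteDescription Classical_Prop.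
From Coquelicot Require Import Coquelicot.
Open Scope R_scope.

Definition lsum (l : list nat) (a : nat -> R) : R := fold_right (fun n s => a n + s) 0 l.

Lemma lsum_app l1 l2 a : lsum (l1 ++ l2) a = lsum l1 a + lsum l2 a.
Proof. induction l1; simpl; [lra|rewrite IHl1; lra]. Qed.

Lemma lsum_seq a K : sum_f_R0 a K = lsum (seq 0 (S K)) a.
Proof.
  induction K. simpl. lra.
  rewrite seq_S, lsum_app, <- IHK. simpl. replace (0 + S K)%nat with (S K) by lia. lra.
Qed.

Lemma lsum_perm l l' a : Permutation l l' -> lsum l a = lsum l' a.
Proof. induction 1; simpl; lra. Qed.

Lemma lsum_map F l a : lsum (map F l) a = lsum l (fun n => a (F n)).
Proof. induction l; simpl; [lra|rewrite IHl; lra]. Qed.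

Lemma lsum_nonneg l a : (forall n, 0 <= a n) -> 0 <= lsum l a.
Proof. intros H; induction l; simpl; [lra|specialize (H a0); lra]. Qed.

Lemma lsum_incl_le a l : forall L, (forall n, 0 <= a n) -> NoDup l -> incl l L ->
  lsum l a <= lsum L a.
Proof.
  induction l as [|x l IH]; intros L Ha Hnd Hi; simpl.
  - apply lsum_nonneg; auto.
  - assert (Hx : In x L) by (apply Hi; left; auto).
    destruct (in_split _ _ Hx) as [L1 [L2 ->]].
    inversion Hnd; subst.
    assert (lsum l a <= lsum (L1 ++ L2) a).
    { apply IH; auto. intros y Hy. assert (In y (L1 ++ x :: L2)) by (apply Hi; right; auto).
      apply in_app_or in H. apply in_or_app. destruct H as [H|[H|H]]; auto.
      subst; contradiction. }
    rewrite lsum_app in *. simpl. lra.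
Qed.

Lemma is_series_Un a l : is_series a l <-> Un_cv (sum_f_R0 a) l.
Proof. rewrite is_series_Reals. split; intro H; exact H. Qed.

Lemma growing_nonneg a : (forall n, 0 <= a n) -> Un_growing (sum_f_R0 a).
Proof. intros H n. simpl. specialize (H (S n)). lra. Qed.

Lemma partial_le_Series a : (forall n, 0 <= a n) -> ex_series a -> forall K, sum_f_R0 a K <= Series a.
Proof.
  intros Ha He K. apply growing_ineq. apply growing_nonneg; auto.
  apply is_series_Un. apply Series_correct; auto.
Qed.

Lemma bounded_series a B : (forall n, 0 <= a n) -> (forall K, sum_f_R0 a K <= B) ->
  ex_series a /\ Series a <= B.
Proof.
  intros Ha Hb.
  destruct (growing_cv (sum_f_R0 a)) as [l Hl].
  apply growing_nonneg; auto. exists B. intros x [K ->]. auto.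
  assert (Hs : is_series a l) by (apply is_series_Un; auto).
  split. exists l; auto.
  rewrite (is_series_unique _ _ Hs).
  assert (Rbar_le l B).
  { apply (is_lim_seq_le (sum_f_R0 a) (fun _ => B)); auto.
    apply is_lim_seq_Reals; auto. apply is_lim_seq_const. }
  simpl in H; auto.
Qed.

Lemma series_eq_eventually a b N : ex_series a -> (forall K, (N <= K)%nat -> sum_f_R0 b K = sum_f_R0 a K) ->
  ex_series b /\ Series b = Series a.
Proof.
  intros He Hk.
  assert (Hs : is_series b (Series a)).
  { apply is_series_Un. apply is_lim_seq_Reals.
    apply (is_lim_seq_ext_loc (sum_f_R0 a)). exists N. intros; symmetry; auto.
    apply is_lim_seq_Reals, is_series_Un, Series_correct; auto. }
  split. exists (Series a); auto. apply is_series_unique; auto.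
Qed.

Lemma bound_fun (F : nat -> nat) K : exists Mx, forall n, (n <= K)%nat -> (F n <= Mx)%nat.
Proof.
  induction K. exists (F 0%nat). intros n Hn. replace n with 0%nat by lia. lia.
  destruct IHK as [Mx H]. exists (Nat.max Mx (F (S K))). intros n Hn.
  destruct (Nat.eq_dec n (S K)). subst; lia. specialize (H n ltac:(lia)). lia.
Qed.

Definition sq (g : nat -> C) (n : nat) : R := (Cmod (g n)) ^ 2.

Lemma sq_nonneg g n : 0 <= sq g n.
Proof. unfold sq. apply pow2_ge_0. Qed.

Lemma inj_sum_le (F : nat -> nat) (a : nat -> R) : FinFun.Injective F -> (forall n, 0 <= a n) ->
  ex_series a -> ex_series (fun n => a (F n)) /\ Series (fun n => a (F n)) <= Series a.
Proof.
  intros Hi Ha He. apply bounded_series. intros; apply Ha.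
  intros K. destruct (bound_fun F K) as [Mx HM].
  rewrite lsum_seq, <- lsum_map.
  apply Rle_trans with (lsum (seq 0 (S Mx)) a).
  apply lsum_incl_le; auto. apply FinFun.Injective_map_NoDup; auto. apply seq_NoDup.
  intros y Hy. apply in_map_iff in Hy. destruct Hy as [n [<- Hn]]. apply in_seq in Hn.
  apply in_seq. specialize (HM n ltac:(lia)). lia.
  rewrite <- lsum_seq. apply partial_le_Series; auto.
Qed.

Lemma inj_OmegaB F : FinFun.Injective F -> OmegaB F.
Proof.
  intros Hi. exists 1. intros g Hg.
  destruct (inj_sum_le F (sq g) Hi (sq_nonneg g) Hg) as [H1 H2].
  split. exact H1. unfold l2norm. rewrite Rmult_1_l. apply sqrt_le_1_alt. exact H2.
Qed.

Lemma perm_sum_eq (F : nat -> nat) (a : nat -> R) N : FinFun.Injective F ->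
  (forall K n, (N <= K)%nat -> (n < K)%nat -> (F n < K)%nat) ->
  ex_series a -> ex_series (fun n => a (F n)) /\ Series (fun n => a (F n)) = Series a.
Proof.
  intros Hi Hp He. apply (series_eq_eventually _ _ N He).
  intros K HK. rewrite !lsum_seq, <- lsum_map. apply lsum_perm.
  apply Permutation_map_same_l. apply FinFun.Injective_map_NoDup; auto. apply seq_NoDup.
  intros y Hy. apply in_map_iff in Hy. destruct Hy as [n [<- Hn]]. apply in_seq in Hn.
  apply in_seq. specialize (Hp (S K) n ltac:(lia) ltac:(lia)). lia.
Qed.

Lemma glb_lt (E : R -> Prop) (e : R) : Rbar_lt (Glb_Rbar E) (Finite e) -> exists r, E r /\ r < e.
Proof.
  intros H. destruct (Glb_Rbar_correct E) as [Hlb Hgr].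
  destruct (Classical_Prop.classic (exists r, E r /\ r < e)) as [?|Hn]; auto.
  exfalso. assert (Rbar_le (Finite e) (Glb_Rbar E)).
  { apply Hgr. intros x Hx. simpl. destruct (Rle_dec e x); auto.
    exfalso; apply Hn; exists x; split; auto; lra. }
  destruct (Glb_Rbar E); simpl in *; lra.
Qed.

Lemma pt_ineq (u w : C) (c : R) : 0 < c ->
  (1-c) * Cmod u ^2 <= Cmod (Cminus u w)^2 + (/c - 1) * Cmod w ^2.
Proof.
  intros Hc. rewrite !Cmod2_alt. destruct u as [u1 u2], w as [w1 w2].
  unfold Cminus, Cplus, Copp, Re, Im; simpl.
  assert (Hic : c * /c = 1) by (field; lra).
  assert (0 < /c) by (apply Rinv_0_lt_compat; lra).
  assert (0 <= /c * ((c*u1 - w1)^2 + (c*u2-w2)^2)).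
  { apply Rmult_le_pos; [lra| pose proof (pow2_ge_0 (c*u1-w1)); pose proof (pow2_ge_0 (c*u2-w2)); lra]. }
  replace (/c * ((c*u1 - w1)^2 + (c*u2-w2)^2)) with
    (c*c*/c * (u1^2+u2^2) - 2 * (c*/c) * (u1*w1+u2*w2) + /c*(w1^2+w2^2)) in H0 by ring.
  rewrite Hic in H0. replace (c*c*/c) with c in H0 by (field; lra). nra.
Qed.

Lemma pt_ineq2 (u w : C) : Cmod (Cminus u w)^2 <= 2 * Cmod u ^2 + 2 * Cmod w ^2.
Proof.
  rewrite !Cmod2_alt. destruct u as [u1 u2], w as [w1 w2].
  unfold Cminus, Cplus, Copp, Re, Im; simpl.
  pose proof (pow2_ge_0 (u1+w1)); pose proof (pow2_ge_0 (u2+w2)). nra.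
Qed.

Lemma series_one (S : R) : 0 <= S -> sqrt S = 1 -> S = 1.
Proof.
  intros H0 H. rewrite <- (sqrt_sqrt S H0), H. ring.
Qed.

Lemma series_nonneg a : (forall n, 0 <= a n) -> ex_series a -> 0 <= Series a.
Proof.
  intros H He.
  apply Rle_trans with (sum_f_R0 a 0). simpl; apply H. apply partial_le_Series; auto.
Qed.

Lemma ex_series_R_plus a b : ex_series a -> ex_series b -> ex_series (fun n => a n + b n).
Proof. intros Ha Hb. exact (ex_series_plus a b Ha Hb). Qed.

Lemma ex_series_R_scal k a : ex_series a -> ex_series (fun n => k * a n).
Proof. intros Ha. apply (ex_series_ext (fun n => a n * k) (fun n => k * a n)).
  intros n; simpl; ring. apply ex_series_scal_r; auto. Qed.

Lemma even_inner F eps N w : 0 < eps < 1 -> FinFun.Injective F ->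
  (forall K n, (N <= K)%nat -> (n < K)%nat -> (F n < K)%nat) ->
  Rbar_lt (sigma_inf F w) (Finite eps) -> (1 - eps)/2 < Cmod w.
Proof.
  intros Heps Hi Hp Hs. apply glb_lt in Hs. destruct Hs as [r [[g [Hg [Hn1 ->]]] Hr]].
  set (c := (1-eps)/2). assert (Hc : 0 < c) by (unfold c; lra).
  destruct (Rlt_le_dec c (Cmod w)) as [?|Hw]; auto. exfalso.
  assert (Sg : Series (sq g) = 1).
  { apply series_one. apply series_nonneg; auto. apply sq_nonneg. exact Hn1. }
  destruct (perm_sum_eq F (sq g) N Hi Hp Hg) as [Hu Su].
  set (v := fun n => Cmult w (g n)).
  assert (Hvs : forall n, Cmod (v n) ^2 = Cmod w ^2 * sq g n).
  { intros n; unfold v, sq; rewrite Cmod_mult; ring. }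
  assert (Hv : ex_series (fun n => Cmod (v n)^2)).
  { apply (ex_series_ext (fun n => Cmod w ^2 * sq g n)). intros; rewrite Hvs; auto.
    apply ex_series_R_scal; auto. }
  assert (Sv : Series (fun n => Cmod (v n)^2) = Cmod w ^2).
  { rewrite (Series_ext _ (fun n => Cmod w ^2 * sq g n)) by (intros; apply Hvs).
    rewrite Series_scal_l, Sg; ring. }
  set (D := fun n => Cmod (Cminus (g (F n)) (v n)) ^2).
  assert (HD : ex_series D).
  { apply (ex_series_le D (fun n => 2 * sq g (F n) + 2 * Cmod (v n)^2)).
    - intros n. change (norm (D n)) with (Rabs (D n)). rewrite Rabs_pos_eq.
      apply pt_ineq2. apply pow2_ge_0.
    - apply ex_series_R_plus; apply ex_series_R_scal; auto. }
  assert (Hle : Series (fun n => (1-c) * sq g (F n)) <= Series (fun n => D n + (/c - 1) * Cmod (v n)^2)).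
  { apply Series_le. intros n. split.
    apply Rmult_le_pos. unfold c; lra. apply sq_nonneg. apply pt_ineq; auto.
    apply ex_series_R_plus; auto. apply ex_series_R_scal; auto. }
  rewrite Series_scal_l, Series_plus, Series_scal_l, Su, Sg, Sv in Hle; auto.
  2: apply ex_series_R_scal; auto.
  assert (Hw2 : Cmod w ^2 <= c^2).
  { pose proof (Cmod_ge_0 w). nra. }
  assert (Hk : 0 <= /c - 1).
  { assert (c < 1) by (unfold c; lra).
    assert (1 <= /c). { rewrite <- Rinv_1. apply Rinv_le_contravar; lra. } lra. }
  assert (HDb : (1-c)^2 <= Series D).
  { assert ((/c - 1) * Cmod w ^2 <= (/c - 1) * c^2) by (apply Rmult_le_compat_l; auto).
    replace ((/c-1)*c^2) with (c - c^2) in H by (field; lra). nra. }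
  assert (Hsq : 1 - c <= l2norm (fun n => Cminus (koopman F g n) (Cmult w (g n)))).
  { unfold l2norm. rewrite <- (sqrt_pow2 (1-c)) by (unfold c; lra).
    apply sqrt_le_1_alt. exact HDb. }
  unfold c in Hsq. lra.
Qed.

Lemma Cmod_tri (a b : C) : Cmod b <= Cmod a + Cmod (Cminus a b).
Proof.
  replace b with (Cplus a (Copp (Cminus a b))) at 1 by ring.
  eapply Rle_trans. apply Cmod_triangle. rewrite Cmod_opp. lra.
Qed.

Lemma even_excl F eps N z : 0 < eps < 1 -> FinFun.Injective F ->
  (forall K n, (N <= K)%nat -> (n < K)%nat -> (F n < K)%nat) ->
  SpApEps eps F z -> (1 - eps)/2 <= Cmod z.
Proof.
  intros Heps Hi Hp Hz.
  destruct (Rle_dec ((1-eps)/2) (Cmod z)) as [?|Hn]; auto. exfalso.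
  destruct (Hz ((1-eps)/2 - Cmod z) ltac:(lra)) as [w [Hw Hd]].
  pose proof (even_inner F eps N w Heps Hi Hp Hw).
  pose proof (Cmod_tri z w). lra.
Qed.

Definition ee (m n : nat) : C := if Nat.eqb n m then RtoC 1 else RtoC 0.

Lemma sum_ee m K : sum_f_R0 (sq (ee m)) K = if Nat.leb m K then 1 else 0.
Proof.
  assert (Hs : forall n, sq (ee m) n = if Nat.eqb n m then 1 else 0).
  { intros n; unfold sq, ee. destruct (Nat.eqb n m); [rewrite Cmod_1|rewrite Cmod_0]; ring. }
  induction K; simpl.
  - rewrite Hs. destruct m; simpl; auto.
  - rewrite IHK, Hs. destruct (Nat.leb m K) eqn:E1; destruct (Nat.leb m (S K)) eqn:E2;
    destruct (Nat.eqb (S K) m) eqn:E3;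
    apply Nat.leb_le in E1 || apply Nat.leb_gt in E1;
    apply Nat.leb_le in E2 || apply Nat.leb_gt in E2;
    apply Nat.eqb_eq in E3 || apply Nat.eqb_neq in E3; try lia; ring.
Qed.

Lemma ee_l2 m : l2 (ee m) /\ l2norm (ee m) = 1.
Proof.
  assert (Hs : is_series (sq (ee m)) 1).
  { apply is_series_Un. apply is_lim_seq_Reals.
    apply (is_lim_seq_ext_loc (fun _ => 1)). exists m. intros K HK.
    rewrite sum_ee. apply Nat.leb_le in HK. rewrite HK. auto. apply is_lim_seq_const. }
  split. exists 1; exact Hs. unfold l2norm. fold (sq (ee m)).
  rewrite (is_series_unique _ _ Hs). apply sqrt_1.
Qed.

Lemma pt_in F eps m z : 0 < eps ->
  (forall n, Cminus (ee m (F n)) (Cmult z (ee m n)) = RtoC 0) -> SpApEps eps F z.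
Proof.
  intros He H d Hd. exists z. split.
  - destruct (Glb_Rbar_correct (fun r => exists g, l2 g /\ l2norm g = 1 /\
              r = l2norm (fun n => Cminus (koopman F g n) (Cmult z (g n))))) as [Hlb _].
    destruct (ee_l2 m) as [H1 H2].
    assert (Hle := Hlb (l2norm (fun n => Cminus (koopman F (ee m) n) (Cmult z (ee m n))))
      (ex_intro _ (ee m) (conj H1 (conj H2 eq_refl)))).
    assert (H0 : l2norm (fun n => Cminus (koopman F (ee m) n) (Cmult z (ee m n))) = 0).
    { unfold l2norm, koopman. rewrite (Series_ext _ (fun n => 0 * 0)).
      rewrite Series_scal_l, Rmult_0_l. apply sqrt_0.
      intros n; rewrite H, Cmod_0; ring. }
    rewrite H0 in Hle. unfold sigma_inf. destruct (Glb_Rbar _); simpl in *; try lra; auto.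
  - replace (Cminus z z) with (RtoC 0) by ring. rewrite Cmod_0. exact Hd.
Qed.

Lemma haus1 X Y e a : Rbar_lt (hausdorff X Y) (Finite e) -> X a -> distC a Y < e.
Proof.
  intros H Ha. destruct (Lub_Rbar_correct (fun r => (exists a, X a /\ r = distC a Y) \/ (exists b, Y b /\ r = distC b X))) as [Hub _].
  assert (Hle := Hub (distC a Y) (or_introl (ex_intro _ a (conj Ha eq_refl)))).
  unfold hausdorff in H. destruct (Lub_Rbar _); simpl in *; try lra; contradiction.
Qed.

Lemma haus2 X Y e b : Rbar_lt (hausdorff X Y) (Finite e) -> Y b -> distC b X < e.
Proof.
  intros H Hb. destruct (Lub_Rbar_correct (fun r => (exists a, X a /\ r = distC a Y) \/ (exists b, Y b /\ r = distC b X))) as [Hub _].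
  assert (Hle := Hub (distC b X) (or_intror (ex_intro _ b (conj Hb eq_refl)))).
  unfold hausdorff in H. destruct (Lub_Rbar _); simpl in *; try lra; contradiction.
Qed.

Lemma dist_pt a B e : (exists b, B b) -> distC a B < e -> exists b, B b /\ Cmod (Cminus a b) < e.
Proof.
  intros [b0 Hb0] H. unfold distC in H.
  destruct (Glb_Rbar_correct (fun r => exists b, B b /\ r = Cmod (Cminus a b))) as [Hlb Hgr].
  assert (H1 := Hlb _ (ex_intro _ b0 (conj Hb0 eq_refl))).
  assert (H2 : Rbar_le (Finite 0) (Glb_Rbar (fun r => exists b, B b /\ r = Cmod (Cminus a b)))).
  { apply Hgr. intros x [b [_ ->]]. simpl. apply Cmod_ge_0. }
  destruct (glb_lt (fun r => exists b, B b /\ r = Cmod (Cminus a b)) e) as [r [[b [Hb ->]] Hr]].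
  - destruct (Glb_Rbar _); simpl in *; try lra; contradiction.
  - exists b; auto.
Qed.

Definition Ev (P : nat -> nat) (N n : nat) : nat := if Nat.ltb n N then P n else n.
Definition Od (P : nat -> nat) (N n : nat) : nat := if Nat.ltb n N then P n else S n.
Definition Inv (s : (nat -> nat) * nat) : Prop :=
  (1 <= snd s)%nat /\ fst s 0%nat = 0%nat /\ (forall n, (n < snd s)%nat -> (fst s n < snd s)%nat) /\
  (forall a b, (a < snd s)%nat -> (b < snd s)%nat -> fst s a = fst s b -> a = b).
Definition Fk (k : nat) (s : (nat -> nat) * nat) : nat -> nat :=
  if Nat.even k then Ev (fst s) (snd s) else Od (fst s) (snd s).
Definition nxt (k : nat) (s : (nat -> nat) * nat) (B : nat) : (nat -> nat) * nat :=
  if Nat.even k then (Ev (fst s) (snd s), Nat.max (S (snd s)) B)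
  else (fun n => if Nat.ltb n (Nat.max (S (snd s)) B) then Od (fst s) (snd s) n else snd s,
        S (Nat.max (S (snd s)) B)).

Ltac ltcases := repeat match goal with
  | |- context [Nat.ltb ?a ?b] => destruct (Nat.ltb_spec a b)
  | H : context [Nat.ltb ?a ?b] |- _ => destruct (Nat.ltb_spec a b)
  end.

Lemma nxt_inv k s B : Inv s -> Inv (nxt k s B).
Proof.
  destruct s as [P N]. unfold Inv, nxt; cbn [fst snd]. intros [H1 [H0 [Hr Hi]]].
  destruct (Nat.even k); cbn [fst snd]; unfold Ev, Od.
  - split; [lia|]. split. ltcases; auto; lia. split.
    + intros n Hn. ltcases; try lia. specialize (Hr n ltac:(lia)); lia.
    + intros a b Ha Hb. ltcases; intros E; try lia; auto.
      * specialize (Hr a ltac:(lia)); lia.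
      * specialize (Hr b ltac:(lia)); lia.
  - split; [lia|]. split. ltcases; auto; lia. split.
    + intros n Hn. ltcases; try lia. specialize (Hr n ltac:(lia)); lia.
    + intros a b Ha Hb. ltcases; intros E; try lia; auto;
      try (specialize (Hr a ltac:(lia)); lia); try (specialize (Hr b ltac:(lia)); lia).
Qed.

Lemma nxt_agree k s B n : (n < snd s)%nat -> fst (nxt k s B) n = fst s n.
Proof.
  destruct s as [P N]; unfold nxt, Ev, Od; cbn [fst snd]; intros Hn.
  destruct (Nat.even k); cbn [fst snd]; ltcases; auto; lia.
Qed.

Lemma nxt_grow k s B : (S (snd s) <= snd (nxt k s B))%nat /\ (B <= snd (nxt k s B))%nat.
Proof. destruct s as [P N]; unfold nxt; cbn [fst snd]; destruct (Nat.even k); cbn [fst snd]; lia. Qed.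

Lemma nxt_B k s B n : (n < B)%nat -> fst (nxt k s B) n = Fk k s n.
Proof.
  destruct s as [P N]; unfold nxt, Fk, Ev, Od; cbn [fst snd]; intros Hn.
  destruct (Nat.even k); cbn [fst snd]; auto. ltcases; auto; lia.
Qed.

Lemma Fk_low k s n : (n < snd s)%nat -> Fk k s n = fst s n.
Proof. unfold Fk, Ev, Od; destruct (Nat.even k); ltcases; auto; lia. Qed.

Lemma Fk_inj k s : Inv s -> FinFun.Injective (Fk k s).
Proof.
  destruct s as [P N]; unfold Inv, Fk, Ev, Od; cbn [fst snd]. intros [H1 [H0 [Hr Hi]]] a b.
  destruct (Nat.even k); ltcases; intros E; auto; try lia;
  try (specialize (Hr a ltac:(lia)); lia); try (specialize (Hr b ltac:(lia)); lia).
Qed.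

Lemma Fk_even k s : Inv s -> Nat.even k = true ->
  (forall K n, (snd s <= K)%nat -> (n < K)%nat -> (Fk k s n < K)%nat) /\ Fk k s (snd s) = snd s.
Proof.
  destruct s as [P N]; unfold Inv, Fk, Ev; cbn [fst snd]. intros [H1 [H0 [Hr Hi]]] E. rewrite E.
  split. intros K n HK Hn. ltcases; try lia. specialize (Hr n ltac:(lia)); lia.
  ltcases; lia.
Qed.

Lemma Fk_odd k s : Inv s -> Nat.even k = false -> forall n, Fk k s n <> snd s.
Proof.
  destruct s as [P N]; unfold Inv, Fk, Od; cbn [fst snd]. intros [H1 [H0 [Hr Hi]]] E n. rewrite E.
  ltcases; try lia. specialize (Hr n ltac:(lia)); lia.
Qed.

Fixpoint st (Bf : nat -> (nat -> nat) -> nat) (k : nat) : (nat -> nat) * nat :=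
  match k with
  | O => (fun n => n, 1%nat)
  | S k' => nxt k' (st Bf k') (Bf k' (Fk k' (st Bf k')))
  end.

Section St.
Variable Bf : nat -> (nat -> nat) -> nat.

Lemma st_inv k : Inv (st Bf k).
Proof.
  induction k; simpl. unfold Inv; simpl; repeat split; auto; lia.
  apply nxt_inv; auto.
Qed.

Lemma st_grow k : (S k <= snd (st Bf k))%nat.
Proof. induction k; simpl. lia. pose proof (nxt_grow k (st Bf k) (Bf k (Fk k (st Bf k)))). lia. Qed.

Lemma st_mono j k : (j <= k)%nat -> (snd (st Bf j) <= snd (st Bf k))%nat.
Proof.
  induction 1. lia. simpl. pose proof (nxt_grow m (st Bf m) (Bf m (Fk m (st Bf m)))). lia.
Qed.

Lemma st_agree j k n : (j <= k)%nat -> (n < snd (st Bf j))%nat -> fst (st Bf k) n = fst (st Bf j) n.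
Proof.
  induction 1; intros Hn; auto. simpl. rewrite nxt_agree; auto.
  pose proof (st_mono j m H). lia.
Qed.

Definition Finf (n : nat) : nat := fst (st Bf n) n.

Lemma Finf_eq k n : (n < snd (st Bf k))%nat -> Finf n = fst (st Bf k) n.
Proof.
  intros Hn. unfold Finf. destruct (Nat.le_ge_cases n k).
  - symmetry. apply st_agree; auto. pose proof (st_grow n); lia.
  - apply st_agree; auto.
Qed.

Lemma Finf_B k n : (n < Bf k (Fk k (st Bf k)))%nat -> Finf n = Fk k (st Bf k) n.
Proof.
  intros Hn. rewrite (Finf_eq (S k)). simpl. apply nxt_B; auto.
  simpl. pose proof (nxt_grow k (st Bf k) (Bf k (Fk k (st Bf k)))). lia.
Qed.

Lemma Finf_inj : FinFun.Injective Finf.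
Proof.
  intros a b E. pose proof (st_grow (Nat.max a b)).
  rewrite (Finf_eq (Nat.max a b) a), (Finf_eq (Nat.max a b) b) in E by lia.
  destruct (st_inv (Nat.max a b)) as [_ [_ [_ Hi]]]. apply Hi; auto; lia.
Qed.

Lemma Finf_0 : Finf 0%nat = 0%nat.
Proof. unfold Finf. destruct (st_inv 0) as [_ [H _]]. exact H. Qed.
End St.

Lemma fixed_pt F m : FinFun.Injective F -> F m = m ->
  forall n, Cminus (ee m (F n)) (Cmult (RtoC 1) (ee m n)) = RtoC 0.
Proof.
  intros Hi Hm n. assert (ee m (F n) = ee m n).
  { unfold ee. destruct (Nat.eqb_spec (F n) m), (Nat.eqb_spec n m); subst; auto.
    exfalso; apply n0; apply Hi; congruence. congruence. }
  rewrite H. ring.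
Qed.

Lemma miss_pt F m : (forall n, F n <> m) ->
  forall n, Cminus (ee m (F n)) (Cmult (RtoC 0) (ee m n)) = RtoC 0.
Proof.
  intros Hm n. assert (ee m (F n) = RtoC 0).
  { unfold ee. destruct (Nat.eqb_spec (F n) m); auto. exfalso; eapply Hm; eauto. }
  rewrite H. ring.
Qed.

Definition qb (l : list nat) : nat := S (fold_right Nat.max 0%nat l).

Lemma qb_spec l j : In j l -> (j < qb l)%nat.
Proof.
  unfold qb. induction l; simpl; intros H; [contradiction|]. destruct H; subst; [lia|].
  specialize (IHl H); lia.
Qed.

Theorem mainTheorem9 : forall eps : R, 0 < eps < 1 ->
  ~ exists Gam : nat -> GenAlg,
      forall F : nat -> nat, OmegaB F ->
        hausdorff_cvg (fun n => alg_Gam (Gam n) F) (SpApEps eps F).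
Proof.
  intros eps Heps [Gam HG].
  set (c := (1 - eps)/2). set (d := c/4).
  assert (Hd : 0 < d) by (unfold d, c; lra).
  assert (Hex : forall F, exists N0, OmegaB F -> forall n, (N0 <= n)%nat ->
     Rbar_lt (hausdorff (alg_Gam (Gam n) F) (SpApEps eps F)) (Finite d)).
  { intros F. destruct (Classical_Prop.classic (OmegaB F)) as [Ho|Hn].
    - destruct (HG F Ho d Hd) as [N0 HN]. exists N0. intros _. exact HN.
    - exists 0%nat. intros Ho; contradiction. }
  pose (nf := fun F => proj1_sig (IndefiniteDescription.constructive_indefinite_description _ (Hex F))).
  assert (Hnf : forall F, OmegaB F -> forall n, (nf F <= n)%nat ->
     Rbar_lt (hausdorff (alg_Gam (Gam n) F) (SpApEps eps F)) (Finite d)).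
  { intros F. exact (proj2_sig (IndefiniteDescription.constructive_indefinite_description _ (Hex F))). }
  pose (nk := fun k F => Nat.max (nf F) k).
  pose (Bf := fun k F => qb (alg_Lam (Gam (nk k F)) F)).
  pose (G := Finf Bf).
  assert (HOG : OmegaB G) by (apply inj_OmegaB, Finf_inj).
  assert (HOk : forall k, OmegaB (Fk k (st Bf k))).
  { intros k; apply inj_OmegaB, Fk_inj, st_inv. }
  assert (Hgam : forall k z, alg_Gam (Gam (nk k (Fk k (st Bf k)))) G z <->
                              alg_Gam (Gam (nk k (Fk k (st Bf k)))) (Fk k (st Bf k)) z).
  { intros k. apply (alg_cons (Gam (nk k (Fk k (st Bf k)))) _ _ (HOk k) HOG).
    intros j Hj. apply (Finf_B Bf k j). apply qb_spec; exact Hj. }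
  assert (HSG : exists y, SpApEps eps G y).
  { exists (RtoC 1). apply (pt_in G eps 0%nat). lra. apply fixed_pt. apply Finf_inj. apply Finf_0. }
  destruct (HG G HOG d Hd) as [N0 HN0].
  set (k1 := S (2 * N0)). set (k2 := (2 * S N0)%nat).
  assert (E1 : Nat.even k1 = false).
  { unfold k1. rewrite Nat.even_succ, <- Nat.negb_even, Nat.even_mul; reflexivity. }
  assert (E2 : Nat.even k2 = true).
  { unfold k2. rewrite Nat.even_mul; reflexivity. }
  set (F1 := Fk k1 (st Bf k1)). set (n1 := nk k1 F1).
  set (F2 := Fk k2 (st Bf k2)). set (n2 := nk k2 F2).
  assert (Hh1 := Hnf F1 (HOk k1) n1 (Nat.le_max_l _ _)).
  assert (Hh2 := Hnf F2 (HOk k2) n2 (Nat.le_max_l _ _)).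
  assert (Hg1 : Rbar_lt (hausdorff (alg_Gam (Gam n1) G) (SpApEps eps G)) (Finite d)).
  { apply HN0. unfold n1, nk, k1. lia. }
  assert (Hg2 : Rbar_lt (hausdorff (alg_Gam (Gam n2) G) (SpApEps eps G)) (Finite d)).
  { apply HN0. unfold n2, nk, k2. lia. }
  assert (H0in : SpApEps eps F1 (RtoC 0)).
  { apply (pt_in F1 eps (snd (st Bf k1))). lra. apply miss_pt. apply Fk_odd; auto. apply st_inv. }
  destruct (dist_pt (RtoC 0) (alg_Gam (Gam n1) F1) d) as [x0 [Hx0 Dx0]].
  { exact (proj1 (alg_out (Gam n1) F1 (HOk k1))). }
  { exact (haus2 _ _ _ _ Hh1 H0in). }
  assert (Hx0G : alg_Gam (Gam n1) G x0) by (apply (Hgam k1); exact Hx0).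
  destruct (dist_pt x0 (SpApEps eps G) d HSG (haus1 _ _ _ _ Hg1 Hx0G)) as [y0 [Hy0 Dy0]].
  destruct (dist_pt y0 (alg_Gam (Gam n2) G) d) as [x1 [Hx1 Dx1]].
  { exact (proj1 (alg_out (Gam n2) G HOG)). }
  { exact (haus2 _ _ _ _ Hg2 Hy0). }
  assert (Hx1F : alg_Gam (Gam n2) F2 x1) by (apply (Hgam k2); exact Hx1).
  destruct (Fk_even k2 (st Bf k2) (st_inv Bf k2) E2) as [Hp Hfix].
  assert (HS2 : exists y, SpApEps eps F2 y).
  { exists (RtoC 1). apply (pt_in F2 eps (snd (st Bf k2))). lra. apply fixed_pt; auto.
    apply Fk_inj, st_inv. }
  destruct (dist_pt x1 (SpApEps eps F2) d HS2 (haus1 _ _ _ _ Hh2 Hx1F)) as [y1 [Hy1 Dy1]].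
  assert (Hc := even_excl F2 eps (snd (st Bf k2)) y1 Heps (Fk_inj _ _ (st_inv Bf k2)) Hp Hy1).
  pose proof (Cmod_tri x1 y1). pose proof (Cmod_tri y0 x1). pose proof (Cmod_tri x0 y0).
  pose proof (Cmod_tri (RtoC 0) x0). rewrite Cmod_0 in H2.
  fold c in Hc. unfold d in *. lra.
Qed.
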